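(* Let $n\ge1$, $p,q\in(0,1)^n$, and let $P=\operatorname{Ber}(p)$, $Q=\operatorname{Ber}(q)$ be probability measures on $\{0,1\}^n$. Then $$\sqrt{\prod_{i=1}^n\frac{1-(p_i-q_i)^2}{2}}\;\le\;\sum_{x\in\{0,1\}^n}\sqrt{P(x)Q(x)}\;\le\;\sqrt{\prod_{i=1}^n\big[1-(p_i-q_i)^2\big]}.$$
   Context: For $p=(p_1,\ldots,p_n)\in(0,1)^n$, $\operatorname{Ber}(p)$ is the product Bernoulli probability measure on $\{0,1\}^n$: $\operatorname{Ber}(p)(x)=\prod_{i=1}^n p_i^{x_i}(1-p_i)^{1-x_i}$. *)

(* Defs.v *)
From mathcomp Require Import all_boot all_order all_algebra.
From mathcomp Require Import reals.
Set Implicit Arguments. Unset Strict Implicit. Unset Printing Implicit Defensive.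
Import Order.TTheory GRing.Theory Num.Theory.
Local Open Scope ring_scope.

Definition Ber (R : realType) (n : nat) (p : 'I_n -> R) (x : {ffun 'I_n -> bool}) : R :=
  \prod_(i < n) (if x i then p i else 1 - p i).

(* Main.v *)
Require Import Defs.
From mathcomp Require Import all_boot all_order all_algebra.
From mathcomp Require Import reals.
From mathcomp Require Import ring lra.
Import Order.TTheory GRing.Theory Num.Theory.
Local Open Scope ring_scope.

Lemma sqrt_prod (R : realType) (I : finType) (F : I -> R) :
  (forall i, 0 <= F i) ->
  Num.sqrt (\prod_i F i) = \prod_i Num.sqrt (F i).
Proof.
move=> F0.
suff [] : \prod_i Num.sqrt (F i) = Num.sqrt (\prod_i F i) /\ 0 <= \prod_i F i by [].
apply: (big_ind2 (fun a b => a = Num.sqrt b /\ 0 <= b)).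
- by rewrite sqrtr1.
- move=> a1 b1 a2 b2 [-> h1] [-> h2]; split; first by rewrite sqrtrM.
  exact: mulr_ge0.
- by move=> i _; split.
Qed.

Lemma key (R : realType) (p q : R) : 0 < p < 1 -> 0 < q < 1 ->
  let b := Num.sqrt (p * q) + Num.sqrt ((1 - p) * (1 - q)) in
  0 <= b /\ (1 - (p - q) ^+ 2) / 2 <= b ^+ 2 /\ b ^+ 2 <= 1 - (p - q) ^+ 2.
Proof.
move=> /andP[p0 p1] /andP[q0 q1] b.
set u := Num.sqrt (p * q); set v := Num.sqrt ((1 - p) * (1 - q)).
have u0 : 0 <= u by exact: sqrtr_ge0.
have v0 : 0 <= v by exact: sqrtr_ge0.
have u2 : u ^+ 2 = p * q by rewrite sqr_sqrtr // mulr_ge0 // ltW.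
have v2 : v ^+ 2 = (1 - p) * (1 - q) by rewrite sqr_sqrtr // mulr_ge0 // subr_ge0 ltW.
have uv2 : (u * v) ^+ 2 = (p * (1 - p)) * (q * (1 - q)).
  by rewrite exprMn u2 v2; ring.
have uv0 : 0 <= u * v by exact: mulr_ge0.
have hs : 0 <= p * (1 - p) + q * (1 - q) by nra.
have huv : 2 * (u * v) <= p * (1 - p) + q * (1 - q).
  have : (2 * (u * v)) ^+ 2 <= (p * (1 - p) + q * (1 - q)) ^+ 2.
    rewrite exprMn uv2.
    have := sqr_ge0 (p * (1 - p) - q * (1 - q)).
    set a := p * (1 - p); set c := q * (1 - q); nra.
  by rewrite -ler_sqrt ?exprn_ge0 ?mulr_ge0 // !sqrtr_sqr !ger0_norm // mulr_ge0.
have hb : b ^+ 2 = u ^+ 2 + v ^+ 2 + 2 * (u * v) by rewrite /b -/u -/v; ring.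
split; first by rewrite /b addr_ge0.
rewrite hb u2 v2; split; nra.
Qed.

Theorem lemma1 (R : realType) (n : nat) (p q : 'I_n -> R)
  (hn : (1 <= n)%N)
  (hp : forall i, 0 < p i < 1) (hq : forall i, 0 < q i < 1) :
  Num.sqrt (\prod_(i < n) ((1 - (p i - q i) ^+ 2) / 2))
    <= \sum_(x : {ffun 'I_n -> bool}) Num.sqrt (Ber p x * Ber q x)
  /\ \sum_(x : {ffun 'I_n -> bool}) Num.sqrt (Ber p x * Ber q x)
    <= Num.sqrt (\prod_(i < n) (1 - (p i - q i) ^+ 2)).
Proof.
pose b i := Num.sqrt (p i * q i) + Num.sqrt ((1 - p i) * (1 - q i)).
have E : \sum_(x : {ffun 'I_n -> bool}) Num.sqrt (Ber p x * Ber q x) = \prod_i b i.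
  rewrite (eq_bigr (fun i => \sum_(c : bool) Num.sqrt ((if c then p i else 1 - p i) *
                                            (if c then q i else 1 - q i)))); last first.
    by move=> i _; rewrite /b big_bool.
  rewrite bigA_distr_bigA /=; apply: eq_bigr => x _.
  rewrite /Ber -big_split /= sqrt_prod // => i.
  have := hp i; have := hq i; case: (x i) => /andP[? ?] /andP[? ?];
    apply: mulr_ge0; lra.
rewrite E.
have K i : 0 <= b i /\ (1 - (p i - q i) ^+ 2) / 2 <= b i ^+ 2 /\ b i ^+ 2 <= 1 - (p i - q i) ^+ 2 := @key _ _ _ (hp i) (hq i).
have b0 : 0 <= \prod_i b i by apply: prodr_ge0 => i _; case: (K i).
split.
- rewrite -(ger0_norm b0) -sqrtr_sqr ler_wsqrtr // -prodrXl.
  apply: ler_prod => i _; case: (K i) => _ [h1 _]; rewrite h1 andbT.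
  have := hp i; have := hq i; move=> /andP[? ?] /andP[? ?]; nra.
- rewrite -(ger0_norm b0) -sqrtr_sqr ler_wsqrtr // -prodrXl.
  apply: ler_prod => i _; case: (K i) => _ [_ h2]; rewrite h2 andbT.
  exact: exprn_ge0 (proj1 (K i)).
Qed.
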